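(* For all sr-expressions $e \in \mathcal{T}$, we have $L_\Sigma(e) = \llbracket e\rrbracket$.
   Context: Fix a finite alphabet $\Sigma$. The set $\mathcal{T}$ of series-rational expressions (sr-expressions) is generated by $e, f ::= 0 \mid 1 \mid \mathtt{a}\in\Sigma \mid e+f \mid e\cdot f \mid e\parallel f \mid e^*$. Their semantics $\llbracket -\rrbracket$ maps each expression to a set of series-parallel pomsets: $\llbracket 0\rrbracket=\emptyset$, $\llbracket 1\rrbracket=\{1\}$ (the empty pomset), $\llbracket \mathtt{a}\rrbracket=\{\mathtt{a}\}$, and $+,\cdot,\parallel,{}^*$ are interpreted as union, pointwise sequential composition, pointwise parallel composition and Kleene closure of pomset languages. $\mathcal{F}\subseteq\mathcal{T}$ is the smallest set with $1\in\mathcal{F}$; $e+f\in\mathcal{F}$ if $e\in\mathcal{F}$ or $f\in\mathcal{F}$; $e\cdot f, e\parallel f\in\mathcal{F}$ if $e,f\in\mathcal{F}$; and $e^*\in\mathcal{F}$ for all $e$. A pomset automaton (PA) is a tuple $\langle Q,F,\delta,\gamma\rangle$ with states $Q$, accepting states $F\subseteq Q$, $\delta: Q\times\Sigma\to 2^Q$ and $\gamma: Q\times\mathbb{M}(Q)\to 2^Q$ (where $\mathbb{M}(Q)$ is the set of finite multisets over $Q$), such that for each $q$ only finitely many $\phi$ have $\gamma(q,\phi)\neq\emptyset$. Its run relation $\rightarrow$ is the smallest relation with: $q\xrightarrow{1} q$; $q\xrightarrow{\mathtt{a}} q'$ if $q'\in\delta(q,\mathtt{a})$; $q\xrightarrow{U\cdot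 V}q'$ if $q\xrightarrow{U}q''\xrightarrow{V}q'$; and $q\xrightarrow{U_1\parallel\cdots\parallel U_n}q'$ if $q'\in\gamma(q,\{\!\{q_1,\dots,q_n\}\!\})$ and $q_i\xrightarrow{U_i}q_i'\in F$ for all $i$. The language of $q$ is $\{U : q\xrightarrow{U} q'\in F\}$. For $e\in\mathcal{T}$ and $T\subseteq\mathcal{T}$, let $e\star T = T$ if $e\in\mathcal{F}$ and $\emptyset$ otherwise, and let $T ; e$ denote the set $\{f\cdot e : f\in T\}$. The derivatives $\delta_\Sigma:\mathcal{T}\times\Sigma\to 2^{\mathcal{T}}$ and $\gamma_\Sigma:\mathcal{T}\times\mathbb{M}(\mathcal{T})\to 2^{\mathcal{T}}$ are defined by: $\delta_\Sigma(0,\mathtt a)=\delta_\Sigma(1,\mathtt a)=\emptyset$; $\delta_\Sigma(\mathtt b,\mathtt a)=\{1 : \mathtt a=\mathtt b\}$; $\delta_\Sigma(e+f,\mathtt a)=\delta_\Sigma(e,\mathtt a)\cup\delta_\Sigma(f,\mathtt a)$; $\delta_\Sigma(e\cdot f,\mathtt a)=\{g\cdot f : g\in\delta_\Sigma(e,\mathtt a)\}\cup e\star\delta_\Sigma(f,\mathtt a)$; $\delta_\Sigma(e\parallel f,\mathtt a)=\emptyset$; $\delta_\Sigma(e^*,\mathtt a)=\{g\cdot e^* : g\in\delta_\Sigma(e,\mathtt a)\}$; and $\gamma_\Sigma(0,\phi)=\gamma_\Sigma(1,\phi)=\gamma_\Sigma(\mathtt b,\phi)=\emptyset$; $\gamma_\Sigma(e+f,\phi)=\gamma_\Sigma(e,\phi)\cup\gamma_\Sigma(f,\phi)$;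 $\gamma_\Sigma(e\cdot f,\phi)=\{g\cdot f: g\in\gamma_\Sigma(e,\phi)\}\cup e\star\gamma_\Sigma(f,\phi)$; $\gamma_\Sigma(e\parallel f,\phi)=\{1 : \phi=\{\!\{e,f\}\!\}\}$; $\gamma_\Sigma(e^*,\phi)=\{g\cdot e^* : g\in\gamma_\Sigma(e,\phi)\}$. The syntactic PA is $A_\Sigma=\langle\mathcal{T},\mathcal{F},\delta_\Sigma,\gamma_\Sigma\rangle$, and $L_\Sigma(e)$ denotes the language of state $e$ in $A_\Sigma$. *)

(* Defs.v *)
From Stdlib Require Import List Permutation.
From mathcomp Require Import all_boot.

Set Implicit Arguments.
Unset Strict Implicit.
Unset Printing Implicit Defensive.

Section SR.

Variable Sigma : finType.

(* Pomsets: finite labelled posets; equality of pomsets is isomorphism *)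

Record pomset := Pomset {
  pcar : finType;
  plab : pcar -> Sigma;
  ple  : rel pcar;
  ple_refl  : reflexive ple;
  ple_anti  : antisymmetric ple;
  ple_trans : transitive ple }.
Arguments plab p _ : clear implicits.
Arguments ple p _ _ : clear implicits.

Definition pom_iso (U V : pomset) : Prop :=
  exists f : pcar U -> pcar V,
    bijective f /\ (forall x, plab V (f x) = plab U x) /\
    (forall x y, ple V (f x) (f y) = ple U x y).

Definition one_le : rel void := fun _ _ => true.
Lemma one_refl : reflexive one_le. Proof. by []. Qed.
Lemma one_anti : antisymmetric one_le. Proof. by case. Qed.
Lemma one_trans : transitive one_le. Proof. by []. Qed.
Definition pom_one : pomset :=
  @Pomset void (fun x => match x with end) one_le one_refl one_anti one_trans.

Definition atom_le : rel unit := fun _ _ => true.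
Lemma atom_refl : reflexive atom_le. Proof. by []. Qed.
Lemma atom_anti : antisymmetric atom_le. Proof. by move=> [] []. Qed.
Lemma atom_trans : transitive atom_le. Proof. by []. Qed.
Definition pom_atom (a : Sigma) : pomset :=
  @Pomset unit (fun _ => a) atom_le atom_refl atom_anti atom_trans.

Definition comp_le (b : bool) (U V : pomset) : rel (pcar U + pcar V)%type :=
  fun x y => match x, y with
  | inl x, inl y => ple U x y
  | inr x, inr y => ple V x y
  | inl _, inr _ => b
  | inr _, inl _ => false
  end.
Arguments comp_le b U V : clear implicits.

Lemma comp_refl b U V : reflexive (comp_le b U V).
Proof. by case=> x /=; apply: ple_refl. Qed.
Lemma comp_anti b U V : antisymmetric (comp_le b U V).
Proof.
case=> x [] y /= h; try by move: h; rewrite /= ?andbF ?andFb.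
all: first [by congr inl; apply: (ple_anti h) | by congr inr; apply: (ple_anti h)].
Qed.
Lemma comp_trans b U V : transitive (comp_le b U V).
Proof.
case=> y [] x [] z //= h1 h2; try by [apply: ple_trans h1 h2]; by [].
Qed.

Definition comp_lab (U V : pomset) (x : (pcar U + pcar V)%type) : Sigma :=
  match x with inl x => plab U x | inr x => plab V x end.
Arguments comp_lab U V : clear implicits.

Definition pom_seq (U V : pomset) : pomset :=
  @Pomset (pcar U + pcar V)%type (@comp_lab U V) (comp_le true U V)
    (@comp_refl true U V) (@comp_anti true U V) (@comp_trans true U V).

Definition pom_par (U V : pomset) : pomset :=
  @Pomset (pcar U + pcar V)%type (@comp_lab U V) (comp_le false U V)
    (@comp_refl false U V) (@comp_anti false U V) (@comp_trans false U V).

Definition pom_parn (Us : list pomset) : pomset := foldr pom_par pom_one Us.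

Definition lang := pomset -> Prop.

Inductive term : Type :=
| Zero : term
| One : term
| Sym : Sigma -> term
| Plus : term -> term -> term
| Seq : term -> term -> term
| Par : term -> term -> term
| Star : term -> term.

Inductive star_lang (L : lang) : lang :=
| star_nil U : pom_iso U pom_one -> star_lang L U
| star_cons U V W : L V -> star_lang L W -> pom_iso U (pom_seq V W) ->
    star_lang L U.

(* [[e]]; languages are closed under isomorphism (pomsets = iso classes) *)
Fixpoint sem (e : term) : lang :=
  match e with
  | Zero => fun _ => False
  | One => fun U => pom_iso U pom_one
  | Sym a => fun U => pom_iso U (pom_atom a)
  | Plus e f => fun U => sem e U \/ sem f U
  | Seq e f => fun U => exists V W, sem e V /\ sem f W /\ pom_iso U (pom_seq V W)
  | Par e f => fun U => exists V W, sem e V /\ sem f W /\ pom_iso U (pom_par V W)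
  | Star e => star_lang (sem e)
  end.

(* A finite multiset over Q is represented by a list, up to permutation;
   gamma is required to be invariant under permutation of its multiset
   argument, and for every state only finitely many multisets (up to
   permutation) have a nonempty gamma. *)
Record PA := MkPA {
  pa_Q : Type;
  pa_F : pa_Q -> Prop;
  pa_delta : pa_Q -> Sigma -> pa_Q -> Prop;
  pa_gamma : pa_Q -> list pa_Q -> pa_Q -> Prop;
  pa_gamma_perm : forall q phi phi' q',
      Permutation phi phi' -> pa_gamma q phi q' -> pa_gamma q phi' q';
  pa_gamma_fin : forall q, exists Phi : list (list pa_Q),
      forall phi q', pa_gamma q phi q' -> exists2 phi', In phi' Phi & Permutation phi phi' }.

Section Runs.
Variable A : PA.

Inductive run : pa_Q A -> pomset -> pa_Q A -> Prop :=
| run_one q : run q pom_one q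
| run_atom q a q' : pa_delta q a q' -> run q (pom_atom a) q'
| run_seq q q'' q' U V : run q U q'' -> run q'' V q' -> run q (pom_seq U V) q'
| run_par q q' (l : list (pa_Q A * pomset * pa_Q A)) :
    pa_gamma q (map (fun t => t.1.1) l) q' ->
    (forall t, In t l -> run t.1.1 t.1.2 t.2 /\ pa_F t.2) ->
    run q (pom_parn (map (fun t => t.1.2) l)) q'.

Definition pa_lang (q : pa_Q A) : lang :=
  fun U => exists2 U', pom_iso U U' & exists2 q', run q U' q' & pa_F q'.

End Runs.

Fixpoint inF (e : term) : Prop :=
  match e with
  | Zero => False
  | One => True
  | Sym _ => False
  | Plus e f => inF e \/ inF f
  | Seq e f => inF e /\ inF f
  | Par e f => inF e /\ inF f
  | Star _ => True
  end.

Fixpoint deltaS (e : term) (a : Sigma) : term -> Prop :=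
  match e with
  | Zero | One => fun _ => False
  | Sym b => fun g => a = b /\ g = One
  | Plus e f => fun g => deltaS e a g \/ deltaS f a g
  | Seq e f => fun g => (exists2 h, deltaS e a h & g = Seq h f) \/
                        (inF e /\ deltaS f a g)
  | Par _ _ => fun _ => False
  | Star e => fun g => exists2 h, deltaS e a h & g = Seq h (Star e)
  end.

Fixpoint gammaS (e : term) (phi : list term) : term -> Prop :=
  match e with
  | Zero | One | Sym _ => fun _ => False
  | Plus e f => fun g => gammaS e phi g \/ gammaS f phi g
  | Seq e f => fun g => (exists2 h, gammaS e phi h & g = Seq h f) \/
                        (inF e /\ gammaS f phi g)
  | Par e f => fun g => g = One /\ Permutation phi (e :: f :: nil)
  | Star e => fun g => exists2 h, gammaS e phi h & g = Seq h (Star e)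
  end.

Lemma gammaS_perm e phi phi' g :
  Permutation phi phi' -> gammaS e phi g -> gammaS e phi' g.
Proof.
move=> P; elim: e g => //=.
- by move=> e IHe f IHf g [/IHe|/IHf]; auto.
- move=> e IHe f IHf g [[h /IHe Hh ->]|[Fe /IHf]]; [left; exists h | right]; auto.
- move=> e _ f _ g [-> P']; split=> //.
  by apply: Permutation_trans P'; apply: Permutation_sym.
- by move=> e IHe g [h /IHe Hh ->]; exists h.
Qed.

Lemma gammaS_fin e : exists Phi : list (list term),
  forall phi g, gammaS e phi g -> exists2 phi', In phi' Phi & Permutation phi phi'.
Proof.
elim: e => /=.
- by exists nil.
- by exists nil.
- by move=> _; exists nil.
- move=> e [P1 H1] f [P2 H2]; exists (P1 ++ P2) => phi g [/H1|/H2] [p' I Pp];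
  by exists p' => //; apply/in_or_app; auto.
- move=> e [P1 H1] f [P2 H2]; exists (P1 ++ P2) => phi g [[h /H1 [p' I Pp] _]|[_ /H2 [p' I Pp]]];
  by exists p' => //; apply/in_or_app; auto.
- move=> e _ f _; exists ((e :: f :: nil) :: nil) => phi g [_ Pp].
  by exists (e :: f :: nil) => //; left.
- by move=> e [P1 H1]; exists P1 => phi g [h /H1 ? _].
Qed.

Definition A_Sigma : PA :=
  @MkPA term inF deltaS gammaS gammaS_perm gammaS_fin.

Definition L_Sigma (e : term) : lang := @pa_lang A_Sigma e.

End SR.

Arguments Zero {Sigma}.
Arguments One {Sigma}.

(* Main.v *)
From Stdlib Require Import List Permutation.
Require Import Defs.
From mathcomp Require Import all_boot.

Set Implicit Arguments.
Unset Strict Implicit.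
Unset Printing Implicit Defensive.

Section Iso.
Variable Sigma : finType.
Notation pom := (pomset Sigma).

Lemma mk_iso (U V : pom) (f : pcar U -> pcar V) (g : pcar V -> pcar U) :
  cancel f g -> cancel g f -> (forall x, @plab _ V (f x) = @plab _ U x) ->
  (forall x y, @ple _ V (f x) (f y) = @ple _ U x y) -> pom_iso U V.
Proof. move=> fg gf hl ho; exists f; split; [by exists g| by split]. Qed.

Lemma iso_refl (U : pom) : pom_iso U U.
Proof. by apply: (@mk_iso U U id id). Qed.

Lemma iso_sym (U V : pom) : pom_iso U V -> pom_iso V U.
Proof.
move=> [f [[g fg gf] [hl ho]]]; apply: (mk_iso gf fg).
- by move=> x; rewrite -[in RHS](gf x) hl.
- by move=> x y; rewrite -[in RHS](gf x) -[in RHS](gf y) ho.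
Qed.

Lemma iso_trans (U V W : pom) : pom_iso U V -> pom_iso V W -> pom_iso U W.
Proof.
move=> [f [[g fg gf] [hl ho]]] [f' [[g' fg' gf'] [hl' ho']]].
apply: (@mk_iso U W (f' \o f) (g \o g')).
- by move=> x /=; rewrite fg' fg.
- by move=> x /=; rewrite gf gf'.
- by move=> x /=; rewrite hl' hl.
- by move=> x y /=; rewrite ho' ho.
Qed.

Definition smap (A B C D : Type) (f : A -> C) (g : B -> D) (x : A + B) : C + D :=
  match x with inl a => inl (f a) | inr b => inr (g b) end.

Lemma iso_seq (U U' V V' : pom) : pom_iso U U' -> pom_iso V V' ->
  pom_iso (pom_seq U V) (pom_seq U' V').
Proof.
move=> [f [[g fg gf] [hl ho]]] [f' [[g' fg' gf'] [hl' ho']]].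
apply: (@mk_iso (pom_seq U V) (pom_seq U' V') (smap f f') (smap g g')).
- by case=> x /=; rewrite ?fg ?fg'.
- by case=> x /=; rewrite ?gf ?gf'.
- by case=> x /=; rewrite ?hl ?hl'.
- by case=> x [] y /=; rewrite ?ho ?ho'.
Qed.

Lemma iso_par (U U' V V' : pom) : pom_iso U U' -> pom_iso V V' ->
  pom_iso (pom_par U V) (pom_par U' V').
Proof.
move=> [f [[g fg gf] [hl ho]]] [f' [[g' fg' gf'] [hl' ho']]].
apply: (@mk_iso (pom_par U V) (pom_par U' V') (smap f f') (smap g g')).
- by case=> x /=; rewrite ?fg ?fg'.
- by case=> x /=; rewrite ?gf ?gf'.
- by case=> x /=; rewrite ?hl ?hl'.
- by case=> x [] y /=; rewrite ?ho ?ho'.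
Qed.

Definition dropl (B : Type) (x : void + B) : B :=
  match x with inl v => match v with end | inr b => b end.
Definition dropr (A : Type) (x : A + void) : A :=
  match x with inr v => match v with end | inl a => a end.

Lemma seq_one_l (W : pom) : pom_iso (pom_seq (pom_one Sigma) W) W.
Proof.
apply: (@mk_iso (pom_seq (pom_one Sigma) W) W (@dropl (pcar W)) (fun w => inr w)).
- by case=> [[]|].
- by [].
- by case=> [[]|].
- by case=> [[]|x] [[]|y].
Qed.

Lemma seq_one_r (W : pom) : pom_iso (pom_seq W (pom_one Sigma)) W.
Proof.
apply: (@mk_iso (pom_seq W (pom_one Sigma)) W (@dropr (pcar W)) (fun w => inl w)).
- by case=> [|[]].
- by [].
- by case=> [|[]].
- by case=> [x|[]] [y|[]].
Qed.

Lemma par_one_r (W : pom) : pom_iso (pom_par W (pom_one Sigma)) W.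
Proof.
apply: (@mk_iso (pom_par W (pom_one Sigma)) W (@dropr (pcar W)) (fun w => inl w)).
- by case=> [|[]].
- by [].
- by case=> [|[]].
- by case=> [x|[]] [y|[]].
Qed.

Definition swap (A B : Type) (x : A + B) : B + A :=
  match x with inl a => inr a | inr b => inl b end.

Lemma par_comm (U V : pom) : pom_iso (pom_par U V) (pom_par V U).
Proof.
apply: (@mk_iso (pom_par U V) (pom_par V U) (@swap (pcar U) (pcar V)) (@swap (pcar V) (pcar U))).
- by case.
- by case.
- by case.
- by case=> x [] y.
Qed.

Definition assoc1 (A B C : Type) (x : A + (B + C)) : (A + B) + C :=
  match x with inl a => inl (inl a) | inr (inl b) => inl (inr b) | inr (inr c) => inr c end.
Definition assoc2 (A B C : Type) (x : (A + B) + C) : A + (B + C) :=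
  match x with inl (inl a) => inl a | inl (inr b) => inr (inl b) | inr c => inr (inr c) end.

Lemma seq_assoc (U V W : pom) :
  pom_iso (pom_seq U (pom_seq V W)) (pom_seq (pom_seq U V) W).
Proof.
apply: (@mk_iso (pom_seq U (pom_seq V W)) (pom_seq (pom_seq U V) W) (@assoc1 (pcar U) (pcar V) (pcar W)) (@assoc2 (pcar U) (pcar V) (pcar W))).
- by case=> [|[]].
- by case=> [[]|].
- by case=> [|[]].
- by case=> [x|[x|x]] [y|[y|y]].
Qed.

End Iso.

Section Main.
Variable Sigma : finType.
Notation pom := (pomset Sigma).
Notation term := (term Sigma).
Notation A := (A_Sigma Sigma).
Notation runS := (@run Sigma A).

Lemma sem_iso (e : term) (U V : pom) : pom_iso U V -> sem e V -> sem e U.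
Proof.
elim: e U V => //=.
- by move=> U V h1 h2; apply: iso_trans h1 h2.
- by move=> a U V h1 h2; apply: iso_trans h1 h2.
- by move=> e IHe f IHf U V h [H|H]; [left; apply: IHe h H|right; apply: IHf h H].
- move=> e _ f _ U V h [V1 [W1 [H1 [H2 H3]]]]; exists V1, W1; split; [done|split; [done|]].
  by apply: iso_trans h H3.
- move=> e _ f _ U V h [V1 [W1 [H1 [H2 H3]]]]; exists V1, W1; split; [done|split; [done|]].
  by apply: iso_trans h H3.
- move=> e _ U V h H; case: H h => [V0 H|V0 V1 W1 H1 H2 H3] h.
  + by apply: star_nil; apply: iso_trans h H.
  + by apply: (star_cons H1 H2); apply: iso_trans h H3.
Qed.

Lemma inF_one (e : term) : inF e -> sem e (pom_one Sigma).
Proof.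
elim: e => //=.
- by move=> _; apply: iso_refl.
- by move=> e IHe f IHf [H|H]; [left; apply: IHe|right; apply: IHf].
- move=> e IHe f IHf [H1 H2]; exists (pom_one Sigma), (pom_one Sigma); split; [auto|split; [auto|]].
  by apply: iso_sym; apply: seq_one_l.
- move=> e IHe f IHf [H1 H2]; exists (pom_one Sigma), (pom_one Sigma); split; [auto|split; [auto|]].
  by apply: iso_sym; apply: par_one_r.
- by move=> e _ _; apply: star_nil; apply: iso_refl.
Qed.


Lemma delta_sem (e : term) a g : deltaS e a g ->
  forall W, sem g W -> sem e (pom_seq (pom_atom a) W).
Proof.
elim: e g => //=.
- move=> b g [-> ->] W HW /=.
  apply: iso_trans (seq_one_r (pom_atom b)).
  by apply: iso_seq => //; apply: iso_refl.
- by move=> e IHe f IHf g [H|H] W HW; [left; apply: IHe H W HW|right; apply: IHf H W HW].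
- move=> e IHe f IHf g [[h Hh ->]|[Fe H]] W HW.
  + case: HW => [V1 [W1 [H1 [H2 H3]]]].
    exists (pom_seq (pom_atom a) V1), W1; split; first exact: IHe Hh _ H1.
    split => //; apply: iso_trans (seq_assoc _ _ _).
    by apply: iso_seq => //; apply: iso_refl.
  + exists (pom_one Sigma), (pom_seq (pom_atom a) W); split; first exact: inF_one.
    split; first exact: IHf H W HW.
    by apply: iso_sym; apply: seq_one_l.
- move=> e IHe g [h Hh ->] W [V1 [W1 [H1 [H2 H3]]]].
  apply: (star_cons (V := pom_seq (pom_atom a) V1) (W := W1)); first exact: IHe Hh _ H1.
    done.
  apply: iso_trans (seq_assoc _ _ _).
  by apply: iso_seq => //; apply: iso_refl.
Qed.

Lemma gamma_sem (e : term) phi g : gammaS e phi g ->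
  forall l : seq (term * pom * term), phi = map (fun t => t.1.1) l ->
  (forall t, In t l -> sem t.1.1 t.1.2) ->
  forall W, sem g W -> sem e (pom_seq (pom_parn (map (fun t => t.1.2) l)) W).
Proof.
move=> + l Hl Hs; set X := pom_parn _.
elim: e g => //=.
- by move=> e IHe f IHf g [H|H] W HW; [left; apply: IHe H W HW|right; apply: IHf H W HW].
- move=> e IHe f IHf g [[h Hh ->]|[Fe H]] W HW.
  + case: HW => [V1 [W1 [H1 [H2 H3]]]].
    exists (pom_seq X V1), W1; split; first exact: IHe Hh _ H1.
    split => //; apply: iso_trans (seq_assoc _ _ _).
    by apply: iso_seq => //; apply: iso_refl.
  + exists (pom_one Sigma), (pom_seq X W); split; first exact: inF_one.
    split; first exact: IHf H W HW.
    by apply: iso_sym; apply: seq_one_l.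
- move=> e _ f _ g [-> Hp] W HW.
  have HX : pom_iso (pom_seq X W) X.
    apply: iso_trans (seq_one_r X).
    by apply: iso_seq => //; apply: iso_refl.
  subst phi X.
  case: l Hp Hs HX => [|t1 [|t2 [|t3 l]]] /= Hp Hs HX;
    try by move/Permutation_length: Hp.
  have HX2 : pom_iso (pom_seq (pom_par t1.1.2 (pom_par t2.1.2 (pom_one Sigma))) W)
                     (pom_par t1.1.2 t2.1.2).
    apply: iso_trans HX _; apply: iso_par; [apply: iso_refl|apply: par_one_r].
  have S1 : sem t1.1.1 t1.1.2 by apply: Hs; left.
  have S2 : sem t2.1.1 t2.1.2 by apply: Hs; right; left.
  case: (Permutation_length_2_inv (Permutation_sym Hp)) => [[E1 E2]|[E1 E2]].
  + exists t1.1.2, t2.1.2; rewrite -E1 -E2; split; [done|split; [done|exact: HX2]].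
  + exists t2.1.2, t1.1.2; rewrite -E1 -E2; split; [done|split; [done|]].
    by apply: iso_trans HX2 (par_comm _ _).
- move=> e IHe g [h Hh ->] W [V1 [W1 [H1 [H2 H3]]]].
  apply: (star_cons (V := pom_seq X V1) (W := W1)); first exact: IHe Hh _ H1.
    done.
  apply: iso_trans (seq_assoc _ _ _).
  by apply: iso_seq => //; apply: iso_refl.
Qed.

End Main.

Section Runs2.
Variable Sigma : finType.
Notation pom := (pomset Sigma).
Notation term := (term Sigma).
Notation A := (A_Sigma Sigma).
Notation runS := (@run Sigma A).

Lemma run_ind' (P : term -> pom -> term -> Prop)
  (H1 : forall q, P q (pom_one Sigma) q)
  (H2 : forall q a q', deltaS q a q' -> P q (pom_atom a) q')
  (H3 : forall q q'' q' U V, runS q U q'' -> P q U q'' -> runS q'' V q' -> P q'' V q' ->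
        P q (pom_seq U V) q')
  (H4 : forall q q' (l : seq (term * pom * term)),
        gammaS q (map (fun t => t.1.1) l) q' ->
        (forall t, In t l -> runS t.1.1 t.1.2 t.2 /\ inF t.2 /\ P t.1.1 t.1.2 t.2) ->
        P q (pom_parn (map (fun t => t.1.2) l)) q') :
  forall q U q', runS q U q' -> P q U q'.
Proof.
fix IH 4 => q U q' r; case: r => [q0|q0 a q1 d|q0 q1 q2 U0 V0 r1 r2|q0 q1 l g H].
- exact: H1.
- exact: H2.
- exact: H3 r1 (IH _ _ _ r1) r2 (IH _ _ _ r2).
- apply: H4 => // t Ht.
  case: (H t Ht) => r f.
  split; [exact r|split; [exact f|exact (IH _ _ _ r)]].
Qed.

Lemma run_sem q U q' : runS q U q' -> forall W, sem q' W -> sem q (pom_seq U W).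
Proof.
move=> r; elim/run_ind': q U q' / r.
- move=> q W HW; apply: sem_iso HW; exact: seq_one_l.
- move=> q a q' d W HW; exact: delta_sem d W HW.
- move=> q q'' q' U V _ IH1 _ IH2 W HW.
  apply: sem_iso (IH1 _ (IH2 W HW)); apply: iso_sym; exact: seq_assoc.
- move=> q q' l g H W HW; apply: (gamma_sem g) => // t Ht.
  case: (H t Ht) => _ [Ft IHt].
  apply: sem_iso (IHt _ (inF_one Ft)); apply: iso_sym; exact: seq_one_r.
Qed.

Lemma sim (e g : term) :
  (forall a h, deltaS e a h -> deltaS g a h) ->
  (forall phi h, gammaS e phi h -> gammaS g phi h) ->
  forall U e', runS e U e' -> runS g U e' \/ (e' = e /\ runS g U g).
Proof.
move=> Hd Hg U e' r.
suff: forall q U q', runS q U q' -> q = e -> runS g U q' \/ (q' = e /\ runS g U g).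
  by move/(_ e U e' r erefl).
move=> {U e' r} q U q'; elim.
- by move=> q0 ->; right; split => //; apply: run_one.
- by move=> q0 a q1 d E; left; apply: run_atom; apply: Hd; rewrite -E.
- move=> q0 q1 q2 U0 V0 r1 IH1 r2 IH2 E.
  case: (IH1 E) => [r1'|[E1 r1']].
    by left; apply: run_seq r1' r2.
  case: (IH2 E1) => [r2'|[E2 r2']].
    by left; apply: run_seq r1' r2'.
  by right; split => //; apply: run_seq r1' r2'.
- move=> q0 q1 l gm H E; left; apply: run_par => //.
  by apply: Hg; rewrite -E.
Qed.

Lemma run_seqL (e f : term) U e' : runS e U e' -> runS (Seq e f) U (Seq e' f).
Proof.
elim.
- by move=> q; apply: run_one.
- by move=> q a q' d; apply: run_atom; left; exists q'.
- by move=> q q'' q' U0 V0 _ r1 _ r2; apply: run_seq r1 r2.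
- by move=> q q' l gm H; apply: run_par => //; left; exists q'.
Qed.

Definition acc (e : term) (U : pom) := exists2 q', runS e U q' & inF q'.

Lemma lift_acc (e g : term) U :
  (forall a h, deltaS e a h -> deltaS g a h) ->
  (forall phi h, gammaS e phi h -> gammaS g phi h) ->
  (inF e -> inF g) -> acc e U -> acc g U.
Proof.
move=> Hd Hg HF [q' r Fq]; case: (sim Hd Hg r) => [r'|[E r']].
  by exists q'.
by exists g => //; apply: HF; rewrite -E.
Qed.

Lemma sem_run (e : term) U : sem e U -> exists2 U', pom_iso U U' & acc e U'.
Proof.
elim: e U => /=.
- by [].
- by move=> U HU; exists (pom_one Sigma) => //; exists One => //; apply: run_one.
- move=> a U HU; exists (pom_atom a) => //; exists One => //.
  by apply: run_atom.
- move=> e IHe f IHf U [H|H].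
  + case: (IHe U H) => U' HU' Hacc; exists U' => //.
    by apply: (lift_acc _ _ _ Hacc) => /=; auto.
  + case: (IHf U H) => U' HU' Hacc; exists U' => //.
    by apply: (lift_acc _ _ _ Hacc) => /=; auto.
- move=> e IHe f IHf U [V [W [HV [HW HU]]]].
  case: (IHe V HV) => V' HV' [e1 r1 F1].
  case: (IHf W HW) => W' HW' Hacc2.
  exists (pom_seq V' W'); first by apply: iso_trans HU (iso_seq HV' HW').
  have Hacc3 : acc (Seq e1 f) W'.
    apply: (lift_acc _ _ _ Hacc2) => /=.
    - by move=> a h Hh; right.
    - by move=> phi h Hh; right.
    - by move=> Ff; split.
  case: Hacc3 => q r2 Fq; exists q => //.
  exact: run_seq (run_seqL f r1) r2.
- move=> e IHe f IHf U [V [W [HV [HW HU]]]].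
  case: (IHe V HV) => V' HV' [e1 r1 F1].
  case: (IHf W HW) => W' HW' [f1 r2 F2].
  pose l : seq (term * pom * term) := [:: (e, V', e1); (f, W', f1)].
  exists (pom_parn (map (fun t => t.1.2) l)).
    apply: iso_trans HU _; apply: iso_par => //=.
    by apply: iso_trans HW' _; apply: iso_sym; apply: par_one_r.
  exists One => //; apply: run_par => /=.
    by split => //; apply: Permutation_refl.
  by move=> t [<-|[<-|[]]].
- move=> e IHe U H; elim: H => {U}.
  + by move=> U HU; exists (pom_one Sigma) => //; exists (Star e) => //; apply: run_one.
  + move=> U V W HV _ [W' HW' [s1 r2 F2]] HU.
    case: (IHe V HV) => V' HV' [e1 r1 F1].
    exists (pom_seq V' W'); first by apply: iso_trans HU (iso_seq HV' HW').
    case: (sim (e := Seq e (Star e)) (g := Star e) _ _ (run_seqL (Star e) r1)).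
    * by move=> a h /= [//|[_ ?]].
    * by move=> phi h /= [//|[_ ?]].
    * move=> r1'.
      have Hacc : acc (Seq e1 (Star e)) W'.
        apply: (lift_acc (e := Star e)) => /=.
        - by move=> a h Hh; right.
        - by move=> phi h Hh; right.
        - by move=> _; split.
        - by exists s1.
      case: Hacc => q r3 Fq; exists q => //; exact: run_seq r1' r3.
    * move=> [_ r1']; exists s1 => //; exact: run_seq r1' r2.
Qed.

End Runs2.

Theorem lemma7p13 (Sigma : finType) (e : term Sigma) :
  forall U : pomset Sigma, L_Sigma e U <-> sem e U.
Proof.
move=> U; split.
- move=> [U' HU [q' r Fq]].
  apply: sem_iso HU _.
  apply: sem_iso (iso_sym (seq_one_r U')) _.
  exact: run_sem r _ (inF_one Fq).
- move=> /sem_run [U' HU [q' r Fq]].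
  by exists U' => //; exists q'.
Qed.
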